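(* Let $X_1\subset X_0$ be Banach spaces with continuous embedding, $q\in[1,\infty]$, and set $X_\theta:=(X_0,X_1)_{\theta,q}$ for $\theta\in(0,1)$ (real interpolation). Let $0<\theta_1<\theta_2<\cdots<\theta_n<1$ be fixed. Suppose $l\in X_0'$ satisfies, for some $C_0,C_1,\varepsilon>0$, $$|l(f)|\le C_0\|f\|_{X_0}\quad\forall f\in X_0,\qquad |l(f)|\le C_1\Big[\sum_{i=1}^n\varepsilon^{\theta_i}\|f\|_{X_{\theta_i}}+\varepsilon\|f\|_{X_1}\Big]\quad\forall f\in X_1.$$ Then there is a constant $C>0$, depending on $C_0,C_1$, the $\theta_i$, $q$ and the spaces but independent of $\varepsilon$, such that $|l(f)|\le C\varepsilon^{\theta_1}\|f\|_{X_{\theta_1}}$ for all $f\in X_{\theta_1}$.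
   Context: $(X_0,X_1)_{\theta,q}$ denotes the real ($K$-method) interpolation space with $K(t,f)=\inf_{g\in X_1}(\|f-g\|_{X_0}+t\|g\|_{X_1})$. *)

(* Defs.v *)
From Stdlib Require Import Reals Lra ClassicalEpsilon.
Open Scope R_scope.

(** Supremum of a real set (value 0 if not nonempty-and-bounded-above). *)
Definition Rsup (E : R -> Prop) : R :=
  match excluded_middle_informative (bound E /\ exists x, E x) with
  | left H => proj1_sig (completeness E (proj1 H) (proj2 H))
  | right _ => 0
  end.

(** Infimum (value 0 if not nonempty-and-bounded-below). *)
Definition Rinf (E : R -> Prop) : R := - Rsup (fun x => E (- x)).

Definition rpow (x p : R) : R :=
  if Req_EM_T x 0 then 0 else Rpower x p.

(** A pair of Banach spaces X1 ⊂ X0 with continuous embedding.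
    X0 is the carrier V with norm n0; X1 is the subspace {x | X1 x} with norm n1. *)
Record banach_couple := {
  V : Type;
  vzero : V;
  vadd : V -> V -> V;
  vopp : V -> V;
  vscal : R -> V -> V;
  vadd_assoc : forall x y z, vadd x (vadd y z) = vadd (vadd x y) z;
  vadd_comm : forall x y, vadd x y = vadd y x;
  vadd_0 : forall x, vadd x vzero = x;
  vadd_opp : forall x, vadd x (vopp x) = vzero;
  vscal_1 : forall x, vscal 1 x = x;
  vscal_assoc : forall a b x, vscal a (vscal b x) = vscal (a * b) x;
  vscal_distr_v : forall a x y, vscal a (vadd x y) = vadd (vscal a x) (vscal a y);
  vscal_distr_s : forall a b x, vscal (a + b) x = vadd (vscal a x) (vscal b x);
  n0 : V -> R;
  n0_nonneg : forall x, 0 <= n0 x;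
  n0_def : forall x, n0 x = 0 -> x = vzero;
  n0_scal : forall a x, n0 (vscal a x) = Rabs a * n0 x;
  n0_triangle : forall x y, n0 (vadd x y) <= n0 x + n0 y;
  n0_complete : forall u : nat -> V,
    (forall e, 0 < e -> exists N, forall m k, (N <= m)%nat -> (N <= k)%nat ->
        n0 (vadd (u m) (vopp (u k))) < e) ->
    exists x, forall e, 0 < e -> exists N, forall m, (N <= m)%nat ->
        n0 (vadd (u m) (vopp x)) < e;
  X1 : V -> Prop;
  X1_zero : X1 vzero;
  X1_add : forall x y, X1 x -> X1 y -> X1 (vadd x y);
  X1_scal : forall a x, X1 x -> X1 (vscal a x);
  n1 : V -> R;
  n1_nonneg : forall x, X1 x -> 0 <= n1 x;
  n1_def : forall x, X1 x -> n1 x = 0 -> x = vzero;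
  n1_scal : forall a x, X1 x -> n1 (vscal a x) = Rabs a * n1 x;
  n1_triangle : forall x y, X1 x -> X1 y -> n1 (vadd x y) <= n1 x + n1 y;
  n1_complete : forall u : nat -> V, (forall m, X1 (u m)) ->
    (forall e, 0 < e -> exists N, forall m k, (N <= m)%nat -> (N <= k)%nat ->
        n1 (vadd (u m) (vopp (u k))) < e) ->
    exists x, X1 x /\ forall e, 0 < e -> exists N, forall m, (N <= m)%nat ->
        n1 (vadd (u m) (vopp x)) < e;
  embed : exists c, 0 < c /\ forall x, X1 x -> n0 x <= c * n1 x
}.

Arguments vadd {_}. Arguments vopp {_}. Arguments vscal {_}.
Arguments n0 {_}. Arguments n1 {_}. Arguments X1 {_}.

Definition Kfun (B : banach_couple) (t : R) (f : V B) : R :=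
  Rinf (fun k => exists g, X1 g /\ k = n0 (vadd f (vopp g)) + t * n1 g).

Inductive qexp := qfin (q : R) | qinf.
Definition qexp_ok (q : qexp) : Prop :=
  match q with qfin r => 1 <= r | qinf => True end.

Definition lower_sums (g : R -> R) (s : R) : Prop :=
  exists a b (n : nat), 0 < a /\ a < b /\
    s = sum_f_R0 (fun i =>
          let h := (b - a) / (INR n + 1) in
          h * Rinf (fun y => exists x, a + INR i * h <= x <= a + (INR i + 1) * h
                                     /\ y = g x)) n.

(** Integral over (0,∞) of a nonnegative function (as a sup of lower sums);
    it is finite iff the set of lower sums is bounded. *)
Definition integrable0inf (g : R -> R) : Prop := bound (lower_sums g).
Definition integral0inf (g : R -> R) : R := Rsup (lower_sums g).

Definition tK (B : banach_couple) (theta t : R) (f : V B) : R :=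
  Rpower t (- theta) * Kfun B t f.

Definition in_interp (B : banach_couple) (theta : R) (q : qexp) (f : V B) : Prop :=
  match q with
  | qfin r => integrable0inf (fun t => rpow (tK B theta t f) r / t)
  | qinf => bound (fun y => exists t, 0 < t /\ y = tK B theta t f)
  end.

Definition interp_norm (B : banach_couple) (theta : R) (q : qexp) (f : V B) : R :=
  match q with
  | qfin r => rpow (integral0inf (fun t => rpow (tK B theta t f) r / t)) (1 / r)
  | qinf => Rsup (fun y => exists t, 0 < t /\ y = tK B theta t f)
  end.

Definition linear_functional (B : banach_couple) (l : V B -> R) : Prop :=
  (forall x y, l (vadd x y) = l x + l y) /\ (forall a x, l (vscal a x) = a * l x).

(* Main.v *)
Require Import Defs.
From Stdlib Require Import Reals Lra Lia Classical ClassicalEpsilon.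
Open Scope R_scope.

Lemma Rsup_ub E x : bound E -> E x -> x <= Rsup E.
Proof.
  intros Hb Hx. unfold Rsup.
  destruct (excluded_middle_informative _) as [H|H].
  - destruct (completeness E _ _) as [m [Hub Hlub]]; simpl. now apply Hub.
  - exfalso; apply H; split; [exact Hb| exists x; exact Hx].
Qed.

Lemma Rsup_le E M : (exists x, E x) -> (forall x, E x -> x <= M) -> Rsup E <= M.
Proof.
  intros Hne Hm. unfold Rsup.
  destruct (excluded_middle_informative _) as [H|H].
  - destruct (completeness E _ _) as [m [Hub Hlub]]; simpl. apply Hlub. intros y Hy; now apply Hm.
  - exfalso; apply H; split; [exists M; intros y Hy; now apply Hm | exact Hne].
Qed.

Lemma Rinf_lb E x : (exists m, forall y, E y -> m <= y) -> E x -> Rinf E <= x.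
Proof.
  intros [m Hm] Hx. unfold Rinf.
  assert (- x <= Rsup (fun y => E (- y))).
  { apply Rsup_ub. exists (- m). intros y Hy. specialize (Hm _ Hy). lra.
    now rewrite Ropp_involutive. }
  lra.
Qed.

Lemma Rinf_ge E m : (exists x, E x) -> (forall y, E y -> m <= y) -> m <= Rinf E.
Proof.
  intros [x Hx] Hm. unfold Rinf.
  assert (Rsup (fun y => E (- y)) <= - m).
  { apply Rsup_le. exists (- x). now rewrite Ropp_involutive.
    intros y Hy. specialize (Hm _ Hy). lra. }
  lra.
Qed.

Lemma Rinf_approx E d : (exists x, E x) -> (exists m, forall y, E y -> m <= y) -> 0 < d ->
  exists x, E x /\ x < Rinf E + d.
Proof.
  intros Hne Hb Hd. apply NNPP. intro Hn.
  assert (Rinf E + d <= Rinf E).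
  { apply Rinf_ge; auto. intros y Hy. apply Rnot_lt_le. intro Hl. apply Hn. now exists y. }
  lra.
Qed.

Section Vec.
Variable B : banach_couple.
Notation vz := (vzero B).

Lemma vshuffle (a b c d : V B) : vadd (vadd a b) (vadd c d) = vadd (vadd a c) (vadd b d).
Proof.
  rewrite <- !vadd_assoc. f_equal. rewrite !vadd_assoc. f_equal. apply vadd_comm.
Qed.

Lemma vadd_0l (x : V B) : vadd vz x = x.
Proof. rewrite vadd_comm. apply vadd_0. Qed.

Lemma vopp_l (x : V B) : vadd (vopp x) x = vz.
Proof. rewrite vadd_comm. apply vadd_opp. Qed.

Lemma vopp_unique (x y : V B) : vadd x y = vz -> y = vopp x.
Proof.
  intros H. rewrite <- (vadd_0 _ y). rewrite <- (vadd_opp _ x).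
  rewrite vadd_assoc. rewrite (vadd_comm _ y x), H. apply vadd_0l.
Qed.

Lemma vscal0 (x : V B) : vscal 0 x = vz.
Proof.
  set (s := vscal 0 x).
  assert (Hs : vadd s s = s). { unfold s. rewrite <- vscal_distr_s. f_equal. ring. }
  rewrite <- (vadd_opp _ s). pattern s at 2. rewrite <- Hs.
  rewrite <- vadd_assoc, vadd_opp, vadd_0. reflexivity.
Qed.

Lemma vopp_scal (x : V B) : vopp x = vscal (-1) x.
Proof.
  symmetry. apply vopp_unique. rewrite <- (vscal_1 _ x) at 1. rewrite <- vscal_distr_s.
  replace (1 + -1) with 0 by ring. apply vscal0.
Qed.

Lemma n0_opp (x : V B) : n0 (vopp x) = n0 x.
Proof. rewrite vopp_scal, n0_scal.
  assert (Rabs (-1) = 1) by (unfold Rabs; destruct Rcase_abs; lra). rewrite H; ring. Qed.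

Lemma n0_zero : n0 vz = 0.
Proof. rewrite <- (vscal0 vz). rewrite n0_scal, Rabs_R0. ring. Qed.

Lemma vsub_comm (f g : V B) : n0 (vadd g (vopp f)) = n0 (vadd f (vopp g)).
Proof.
  rewrite <- n0_opp. f_equal. symmetry. apply vopp_unique.
  rewrite (vadd_comm _ g). rewrite vshuffle, vadd_opp, vopp_l. apply vadd_0.
Qed.

Lemma vsub_tri (f g h : V B) : n0 (vadd g (vopp h)) <= n0 (vadd f (vopp h)) + n0 (vadd f (vopp g)).
Proof.
  rewrite <- (vsub_comm f g).
  replace (vadd g (vopp h)) with (vadd (vadd f (vopp h)) (vadd g (vopp f))).
  apply n0_triangle.
  rewrite (vadd_comm _ g). rewrite vshuffle, vadd_opp, vadd_0l. apply vadd_comm.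
Qed.

Lemma vdecomp (f g : V B) : f = vadd (vadd f (vopp g)) g.
Proof. rewrite <- vadd_assoc, vopp_l, vadd_0. reflexivity. Qed.
End Vec.
Section K.
Variable B : banach_couple.

Lemma KS_ne (t : R) (f : V B) : exists k, (fun k => exists g, X1 g /\ k = n0 (vadd f (vopp g)) + t * n1 g) k.
Proof. exists (n0 (vadd f (vopp (vzero B))) + t * n1 (vzero B)). exists (vzero B). split; auto. apply X1_zero. Qed.

Lemma KS_bd (t : R) (f : V B) : 0 <= t -> exists m, forall y, (fun k => exists g, X1 g /\ k = n0 (vadd f (vopp g)) + t * n1 g) y -> m <= y.
Proof. intros Ht. exists 0. intros y [g [Hg ->]]. pose proof (n0_nonneg _ (vadd f (vopp g))). pose proof (n1_nonneg _ g Hg). nra. Qed.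

Lemma K_le t (f g : V B) : 0 <= t -> X1 g -> Kfun B t f <= n0 (vadd f (vopp g)) + t * n1 g.
Proof. intros Ht Hg. apply Rinf_lb. now apply KS_bd. exists g; auto. Qed.

Lemma K_lb t (f : V B) M : (forall g, X1 g -> M <= n0 (vadd f (vopp g)) + t * n1 g) -> M <= Kfun B t f.
Proof. intros H. apply Rinf_ge. apply KS_ne. intros y [g [Hg ->]]. auto. Qed.

Lemma K_ge0 t (f : V B) : 0 <= t -> 0 <= Kfun B t f.
Proof. intros Ht. apply K_lb. intros g Hg. pose proof (n0_nonneg _ (vadd f (vopp g))). pose proof (n1_nonneg _ g Hg). nra. Qed.

Lemma K_approx t (f : V B) d : 0 <= t -> 0 < d -> exists g, X1 g /\ n0 (vadd f (vopp g)) + t * n1 g < Kfun B t f + d.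
Proof. intros Ht Hd. destruct (Rinf_approx _ d (KS_ne t f) (KS_bd t f Ht) Hd) as [y [[g [Hg ->]] Hy]]. exists g; auto. Qed.

Lemma K_mono s t (f : V B) : 0 <= s <= t -> Kfun B s f <= Kfun B t f.
Proof. intros Hs. apply K_lb. intros g Hg. pose proof (K_le s f g (proj1 Hs) Hg). pose proof (n1_nonneg _ g Hg). nra. Qed.

Lemma K_scale s t (f : V B) : 0 < s <= t -> Kfun B t f <= t / s * Kfun B s f.
Proof.
  intros Hs.
  assert (s / t * Kfun B t f <= Kfun B s f).
  { apply K_lb. intros g Hg. pose proof (K_le t f g ltac:(lra) Hg).
    pose proof (n0_nonneg _ (vadd f (vopp g))). pose proof (n1_nonneg _ g Hg).
    assert (0 < s / t <= 1). { split. apply Rdiv_lt_0_compat; lra. apply Rmult_le_reg_r with t. lra. field_simplify; lra. }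
    apply Rle_trans with (s / t * (n0 (vadd f (vopp g)) + t * n1 g)). apply Rmult_le_compat_l; lra.
    replace (s / t * (n0 (vadd f (vopp g)) + t * n1 g)) with (s / t * n0 (vadd f (vopp g)) + s * n1 g) by (field; lra).
    nra. }
  apply Rmult_le_reg_l with (s / t). apply Rdiv_lt_0_compat; lra.
  replace (s / t * (t / s * Kfun B s f)) with (Kfun B s f) by (field; lra). exact H.
Qed.

Lemma K_shift t (f g : V B) : 0 <= t -> Kfun B t g <= Kfun B t f + n0 (vadd f (vopp g)).
Proof.
  intros Ht. cut (Kfun B t g - n0 (vadd f (vopp g)) <= Kfun B t f). lra.
  apply K_lb. intros h Hh. pose proof (K_le t g h Ht Hh). pose proof (vsub_tri B f g h). lra.
Qed.

Lemma K_X1 t (g : V B) : 0 <= t -> X1 g -> Kfun B t g <= t * n1 g.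
Proof. intros Ht Hg. pose proof (K_le t g g Ht Hg). rewrite vadd_opp, n0_zero in H. lra. Qed.

Lemma K_zero t (f : V B) : 0 < t -> Kfun B t f = 0 -> n0 f = 0.
Proof.
  intros Ht HK. destruct (embed B) as [c [Hc Hemb]].
  pose proof (n0_nonneg _ f).
  destruct (Req_dec (n0 f) 0) as [E|E]; auto. exfalso.
  set (A := 1 + c / t). assert (HA : 0 < A) by (unfold A; pose proof (Rdiv_lt_0_compat c t Hc Ht); lra).
  set (d := n0 f / (2 * A)). assert (Hd : 0 < d) by (unfold d; apply Rdiv_lt_0_compat; lra).
  destruct (K_approx t f d ltac:(lra) Hd) as [g [Hg Hlt]]. rewrite HK in Hlt.
  pose proof (n0_nonneg _ (vadd f (vopp g))). pose proof (n1_nonneg _ g Hg).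
  pose proof (Hemb g Hg).
  assert (n0 f <= n0 (vadd f (vopp g)) + n0 g). { rewrite (vdecomp B f g) at 1. apply n0_triangle. }
  assert (n1 g < d / t). { apply Rmult_lt_reg_l with t. lra. field_simplify; lra. }
  assert (n0 f < A * d).
  { unfold A. assert (0 <= t * n1 g) by nra. assert (c * n1 g <= c * (d / t)) by (apply Rmult_le_compat_l; lra).
    replace ((1 + c / t) * d) with (d + c * (d / t)) by (field; lra). lra. }
  unfold d in H5. replace (A * (n0 f / (2 * A))) with (n0 f / 2) in H5 by (field; lra). lra.
Qed.
End K.
Definition CS (g : R -> R) lo hi := fun y => exists x, lo <= x <= hi /\ y = g x.

Lemma CS_inf_le g lo hi x : 0 < lo -> (forall t, 0 < t -> 0 <= g t) -> lo <= x <= hi -> Rinf (CS g lo hi) <= g x.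
Proof.
  intros Hlo Hg Hx. apply Rinf_lb. exists 0. intros y [z [Hz ->]]. apply Hg; lra.
  exists x; auto.
Qed.

Lemma CS_inf_ge g lo hi m : lo <= hi -> (forall x, lo <= x <= hi -> m <= g x) -> m <= Rinf (CS g lo hi).
Proof.
  intros Hlh H. apply Rinf_ge. exists (g lo). exists lo; split; auto; lra.
  intros y [z [Hz ->]]; auto.
Qed.

Lemma tele (F : nat -> R) n : sum_f_R0 (fun i => F (S i) - F i) n = F (S n) - F 0%nat.
Proof. induction n; simpl. ring. rewrite IHn. ring. Qed.

Lemma sum_scal (F : nat -> R) c n : sum_f_R0 (fun i => c * F i) n = c * sum_f_R0 F n.
Proof. induction n; simpl. ring. rewrite IHn. ring. Qed.

Lemma LS_unfold g s : lower_sums g s -> exists a b n, 0 < a /\ a < b /\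
  s = sum_f_R0 (fun i => (b - a) / (INR n + 1) * Rinf (CS g (a + INR i * ((b - a) / (INR n + 1))) (a + (INR i + 1) * ((b - a) / (INR n + 1))))) n.
Proof. intros [a [b [n [H1 [H2 H3]]]]]. exists a, b, n. split; auto. Qed.

Lemma LS_ge0 g s : (forall t, 0 < t -> 0 <= g t) -> lower_sums g s -> 0 <= s.
Proof.
  intros Hg Hs. destruct (LS_unfold g s Hs) as [a [b [n [Ha [Hab ->]]]]].
  assert (Hh : 0 < (b - a) / (INR n + 1)) by (apply Rdiv_lt_0_compat; pose proof (pos_INR n); lra).
  apply cond_pos_sum. intros i. apply Rmult_le_pos. lra.
  apply CS_inf_ge. pose proof (pos_INR i). nra.
  intros x Hx. apply Hg. pose proof (pos_INR i). nra.
Qed.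

Lemma LS_upper g G M : (forall t, 0 < t -> 0 <= g t) ->
  (forall x y, 0 < x -> x < y -> (y - x) * Rinf (CS g x y) <= G y - G x) ->
  (forall x y, 0 < x -> x < y -> G y - G x <= M) ->
  forall s, lower_sums g s -> s <= M.
Proof.
  intros Hg Hc HM s Hs. destruct (LS_unfold g s Hs) as [a [b [n [Ha [Hab ->]]]]].
  set (h := (b - a) / (INR n + 1)).
  assert (Hh : 0 < h) by (apply Rdiv_lt_0_compat; pose proof (pos_INR n); lra).
  apply Rle_trans with (sum_f_R0 (fun i => (fun k => G (a + INR k * h)) (S i) - (fun k => G (a + INR k * h)) i) n).
  - apply sum_Rle. intros i _. cbv beta. rewrite S_INR.
    pose proof (pos_INR i).
    specialize (Hc (a + INR i * h) (a + (INR i + 1) * h) ltac:(nra) ltac:(nra)).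
    replace (a + (INR i + 1) * h - (a + INR i * h)) with h in Hc by ring. exact Hc.
  - rewrite (tele (fun k => G (a + INR k * h))). cbv beta. rewrite S_INR. change (INR 0) with 0. replace (a + (INR n + 1) * h) with b.
    replace (a + 0 * h) with a by ring. apply HM; auto.
    unfold h. field. pose proof (pos_INR n); lra.
Qed.

Lemma LS_mono g f c : 0 < c -> (forall t, 0 < t -> 0 <= g t <= c * f t) -> bound (lower_sums f) ->
  forall s, lower_sums g s -> s <= c * Rsup (lower_sums f).
Proof.
  intros Hc Hgf Hb s Hs. destruct (LS_unfold g s Hs) as [a [b [n [Ha [Hab ->]]]]].
  set (h := (b - a) / (INR n + 1)).
  assert (Hh : 0 < h) by (apply Rdiv_lt_0_compat; pose proof (pos_INR n); lra).
  set (s' := sum_f_R0 (fun i => h * Rinf (CS f (a + INR i * h) (a + (INR i + 1) * h))) n).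
  assert (Hs' : lower_sums f s') by (exists a, b, n; repeat split; auto).
  pose proof (Rsup_ub _ _ Hb Hs').
  apply Rle_trans with (c * s'). 2: apply Rmult_le_compat_l; lra.
  unfold s'. rewrite <- sum_scal. apply sum_Rle. intros i _.
  pose proof (pos_INR i).
  assert (Rinf (CS g (a + INR i * h) (a + (INR i + 1) * h)) / c <= Rinf (CS f (a + INR i * h) (a + (INR i + 1) * h))).
  { apply CS_inf_ge. nra. intros x Hx.
    assert (Rinf (CS g (a + INR i * h) (a + (INR i + 1) * h)) <= g x).
    { apply CS_inf_le; auto. nra. intros t Ht; apply Hgf; auto. }
    destruct (Hgf x ltac:(nra)). apply Rmult_le_reg_l with c. lra. field_simplify; lra. }
  apply Rmult_le_reg_l with (/ c). apply Rinv_0_lt_compat; lra.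
  replace (/ c * (c * (h * Rinf (CS f (a + INR i * h) (a + (INR i + 1) * h))))) with (h * Rinf (CS f (a + INR i * h) (a + (INR i + 1) * h))) by (field; lra).
  replace (/ c * (h * Rinf (CS g (a + INR i * h) (a + (INR i + 1) * h)))) with (h * (Rinf (CS g (a + INR i * h) (a + (INR i + 1) * h)) / c)) by (field; lra).
  apply Rmult_le_compat_l; lra.
Qed.

Lemma LS_single g s : 0 < s -> lower_sums g (s * Rinf (CS g s (2 * s))).
Proof.
  intros Hs. exists s, (2 * s), 0%nat. split; auto. split. lra.
  simpl. replace ((2 * s - s) / (0 + 1)) with s by field. replace (s + 0 * s) with s by ring. replace (s + (0 + 1) * s) with (2 * s) by ring. reflexivity.
Qed.
Definition Nq (q : qexp) (phi : R -> R) : R :=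
  match q with
  | qfin r => rpow (Rsup (lower_sums (fun t => rpow (phi t) r / t))) (1 / r)
  | qinf => Rsup (fun y => exists t, 0 < t /\ y = phi t)
  end.
Definition finq (q : qexp) (phi : R -> R) : Prop :=
  match q with
  | qfin r => integrable0inf (fun t => rpow (phi t) r / t)
  | qinf => bound (fun y => exists t, 0 < t /\ y = phi t)
  end.

Lemma interp_Nq B th q f : interp_norm B th q f = Nq q (fun t => tK B th t f).
Proof. destruct q; reflexivity. Qed.
Lemma in_interp_finq B th q f : in_interp B th q f -> finq q (fun t => tK B th t f).
Proof. destruct q; auto. Qed.

Lemma Rpower_pos x p : 0 < Rpower x p.
Proof. unfold Rpower. apply exp_pos. Qed.

Lemma rpow_ge0 x p : 0 <= rpow x p.
Proof. unfold rpow. destruct (Req_EM_T x 0). lra. left; apply Rpower_pos. Qed.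

Lemma rpow_pos x p : 0 < x -> rpow x p = Rpower x p.
Proof. intros Hx. unfold rpow. destruct (Req_EM_T x 0). lra. reflexivity. Qed.

Lemma rpow_0 p : rpow 0 p = 0.
Proof. unfold rpow. destruct (Req_EM_T 0 0). reflexivity. lra. Qed.

Lemma rpow_le x y p : 0 <= x <= y -> 0 <= p -> rpow x p <= rpow y p.
Proof.
  intros Hxy Hp. destruct (Req_dec x 0) as [->|Hx]. rewrite rpow_0. apply rpow_ge0.
  rewrite !rpow_pos by lra. apply Rle_Rpower_l; lra.
Qed.

Lemma rpow_scal c x p : 0 < c -> 0 <= x -> rpow (c * x) p = Rpower c p * rpow x p.
Proof.
  intros Hc Hx. destruct (Req_dec x 0) as [->|Hx']. rewrite Rmult_0_r, rpow_0. ring.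
  rewrite !rpow_pos by nra. rewrite Rpower_mult_distr; auto. lra.
Qed.

Lemma Rpower_inv x r : 0 < r -> Rpower (Rpower x r) (1 / r) = x \/ x <= 0.
Proof.
  intros Hr. destruct (Rlt_le_dec 0 x); [left|right; auto].
  rewrite Rpower_mult. replace (r * (1 / r)) with 1 by (field; lra). apply Rpower_1; auto.
Qed.

Lemma Rpower_inv' x r : 0 < x -> 0 < r -> Rpower (Rpower x r) (1 / r) = x.
Proof. intros Hx Hr. destruct (Rpower_inv x r Hr); auto. lra. Qed.

Lemma Nq_lower q phi : qexp_ok q -> finq q phi -> (forall t, 0 < t -> 0 <= phi t) ->
  (forall s t, 0 < s -> s <= t <= 2 * s -> phi s <= 2 * phi t) ->
  forall s, 0 < s -> phi s <= 4 * Nq q phi.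
Proof.
  intros Hq Hfin Hpos Hreg s Hs. destruct q as [r|]; simpl in *.
  - set (I := fun t => rpow (phi t) r / t).
    assert (HI : forall t, 0 < t -> 0 <= I t).
    { intros t Ht. unfold I. apply Rmult_le_pos. apply rpow_ge0. left; apply Rinv_0_lt_compat; auto. }
    pose proof (LS_single I s Hs) as Hel.
    assert (Hinf : rpow (phi s / 2) r / (2 * s) <= Rinf (CS I s (2 * s))).
    { apply CS_inf_ge. lra. intros x Hx. unfold I.
      pose proof (Hreg s x Hs Hx). pose proof (Hpos s Hs).
      assert (rpow (phi s / 2) r <= rpow (phi x) r) by (apply rpow_le; lra).
      unfold Rdiv. apply Rmult_le_compat. apply rpow_ge0. left; apply Rinv_0_lt_compat; lra. auto.
      apply Rinv_le_contravar; lra. }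
    pose proof (Rsup_ub _ _ Hfin Hel) as HS.
    set (S := Rsup (lower_sums I)) in *.
    assert (HS2 : rpow (phi s / 2) r / 2 <= S).
    { apply Rle_trans with (s * Rinf (CS I s (2 * s))); auto.
      replace (rpow (phi s / 2) r / 2) with (s * (rpow (phi s / 2) r / (2 * s))) by (field; lra).
      apply Rmult_le_compat_l; lra. }
    pose proof (Hpos s Hs).
    destruct (Req_dec (phi s) 0) as [E|E]. rewrite E. pose proof (rpow_ge0 S (1/r)). lra.
    set (X := phi s / 4). assert (HX : 0 < X) by (unfold X; lra).
    replace (phi s / 2) with (2 * X) in HS2 by (unfold X; field).
    rewrite rpow_pos in HS2 by lra. rewrite <- Rpower_mult_distr in HS2 by lra.
    assert (H2 : 2 <= Rpower 2 r). { rewrite <- (Rpower_1 2) at 1 by lra. apply Rle_Rpower; lra. }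
    pose proof (Rpower_pos X r).
    assert (HS3 : Rpower X r <= S) by nra.
    rewrite rpow_pos by lra.
    assert (HX2 : X <= Rpower S (1 / r)).
    { rewrite <- (Rpower_inv' X r) at 1 by lra. apply Rle_Rpower_l. apply Rlt_le, Rdiv_lt_0_compat; lra. split; auto. }
    unfold X in HX2. lra.
  - assert (phi s <= Rsup (fun y => exists t, 0 < t /\ y = phi t)) by (apply Rsup_ub; auto; exists s; auto).
    pose proof (Hpos s Hs). lra.
Qed.
Lemma LS_ne g : exists s, lower_sums g s.
Proof. exists (1 * Rinf (CS g 1 (2 * 1))). apply LS_single; lra. Qed.

Lemma Rsup_LS_ge0 g : (forall t, 0 < t -> 0 <= g t) -> bound (lower_sums g) -> 0 <= Rsup (lower_sums g).
Proof.
  intros Hg Hb. destruct (LS_ne g) as [s Hs]. apply Rle_trans with s. eapply LS_ge0; eauto.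
  apply Rsup_ub; auto.
Qed.

Lemma Nq_mono q phi psi c : qexp_ok q -> finq q phi -> 0 < c ->
  (forall t, 0 < t -> 0 <= psi t <= c * phi t) -> Nq q psi <= c * Nq q phi.
Proof.
  intros Hq Hfin Hc H. destruct q as [r|]; simpl in *.
  - set (Ip := fun t => rpow (phi t) r / t). set (Is := fun t => rpow (psi t) r / t).
    assert (HIs : forall t, 0 < t -> 0 <= Is t <= Rpower c r * Ip t).
    { intros t Ht. unfold Is, Ip. destruct (H t Ht).
      assert (0 <= phi t) by nra.
      assert (rpow (psi t) r <= Rpower c r * rpow (phi t) r).
      { rewrite <- rpow_scal by lra. apply rpow_le; lra. }
      pose proof (rpow_ge0 (psi t) r). pose proof (Rinv_0_lt_compat t Ht).
      unfold Rdiv. split. nra. rewrite <- Rmult_assoc. apply Rmult_le_compat_r; lra. }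
    pose proof (Rpower_pos c r) as Hcr.
    pose proof (LS_mono Is Ip (Rpower c r) Hcr HIs Hfin) as Hm.
    assert (Hb : bound (lower_sums Is)) by (exists (Rpower c r * Rsup (lower_sums Ip)); intros s Hs; auto).
    assert (H1 : Rsup (lower_sums Is) <= Rpower c r * Rsup (lower_sums Ip)).
    { apply Rsup_le; auto. apply LS_ne. }
    assert (H0 : 0 <= Rsup (lower_sums Is)). { apply Rsup_LS_ge0; auto. intros t Ht; apply HIs; auto. }
    assert (H0' : 0 <= Rsup (lower_sums Ip)). { apply Rsup_LS_ge0; auto. intros t Ht. unfold Ip. apply Rmult_le_pos. apply rpow_ge0. left; apply Rinv_0_lt_compat; auto. }
    apply Rle_trans with (rpow (Rpower c r * Rsup (lower_sums Ip)) (1 / r)).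
    apply rpow_le. lra. apply Rlt_le, Rdiv_lt_0_compat; lra.
    rewrite rpow_scal by lra. rewrite Rpower_inv' by lra. apply Rle_refl.
  - apply Rsup_le. exists (psi 1); exists 1; split; auto; lra.
    intros y [t [Ht ->]]. destruct (H t Ht).
    assert (phi t <= Rsup (fun y => exists t, 0 < t /\ y = phi t)) by (apply Rsup_ub; auto; exists t; auto).
    nra.
Qed.
Lemma dpow c p d t : 0 < t -> derivable_pt_lim (fun s => c * Rpower s p + d) t (c * (p * Rpower t (p - 1))).
Proof.
  intros Ht. replace (c * (p * Rpower t (p - 1))) with (c * (p * Rpower t (p - 1)) + 0) by ring.
  apply (derivable_pt_lim_plus (fun s => c * Rpower s p) (fun _ => d)).
  - apply (derivable_pt_lim_scal (fun s => Rpower s p)). apply derivable_pt_lim_power; auto.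
  - apply derivable_pt_lim_const.
Qed.

Lemma branch (H H' phi : R -> R) x y : 0 < x <= y ->
  (forall c, x <= c <= y -> derivable_pt_lim H c (H' c)) ->
  (forall c, x <= c <= y -> phi c <= H' c) ->
  exists xi, x <= xi <= y /\ (y - x) * phi xi <= H y - H x.
Proof.
  intros Hxy Hd Hp. destruct (Req_dec x y) as [<-|Hne].
  - exists x. split. lra. lra.
  - destruct (MVT_cor2 H H' x y ltac:(lra) Hd) as [c [Hc Hcr]].
    exists c. split. lra. rewrite Hc. rewrite Rmult_comm. apply Rmult_le_compat_r. lra. apply Hp; lra.
Qed.

Lemma cell (phi G1 G1' G2 G2' : R -> R) e : 0 < e -> (forall t, 0 < t -> 0 <= phi t) ->
  (forall t, 0 < t -> derivable_pt_lim G1 t (G1' t)) ->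
  (forall t, 0 < t -> derivable_pt_lim G2 t (G2' t)) ->
  G1 e = G2 e ->
  (forall t, 0 < t -> t <= e -> phi t <= G1' t) ->
  (forall t, e <= t -> phi t <= G2' t) ->
  forall x y, 0 < x -> x < y ->
  (y - x) * Rinf (CS phi x y) <= (fun t => if Rle_dec t e then G1 t else G2 t) y - (fun t => if Rle_dec t e then G1 t else G2 t) x.
Proof.
  intros He Hp HG1 HG2 HGe H1 H2 x y Hx Hxy.
  set (Gp := fun t => if Rle_dec t e then G1 t else G2 t).
  assert (E1 : forall t, t <= e -> Gp t = G1 t). { intros t Ht. unfold Gp. destruct (Rle_dec t e); [auto|lra]. }
  assert (E2 : forall t, e <= t -> Gp t = G2 t). { intros t Ht. unfold Gp. destruct (Rle_dec t e). replace t with e by lra. auto. auto. }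
  assert (Hinf : forall xi, x <= xi <= y -> Rinf (CS phi x y) <= phi xi). { intros xi Hxi. apply CS_inf_le; auto. }
  change ((y - x) * Rinf (CS phi x y) <= Gp y - Gp x).
  destruct (Rle_dec y e) as [Hye|Hye].
  - destruct (branch G1 G1' phi x y ltac:(lra)) as [xi [Hxi Hb]].
    intros c Hc; apply HG1; lra. intros c Hc; apply H1; lra.
    rewrite !E1 by lra. specialize (Hinf xi Hxi). nra.
  - destruct (Rle_dec e x) as [Hex|Hex].
    + destruct (branch G2 G2' phi x y ltac:(lra)) as [xi [Hxi Hb]].
      intros c Hc; apply HG2; lra. intros c Hc; apply H2; lra.
      rewrite !E2 by lra. specialize (Hinf xi Hxi). nra.
    + destruct (branch G1 G1' phi x e ltac:(lra)) as [xi [Hxi Hb]].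
      intros c Hc; apply HG1; lra. intros c Hc; apply H1; lra.
      destruct (branch G2 G2' phi e y ltac:(lra)) as [xi2 [Hxi2 Hb2]].
      intros c Hc; apply HG2; lra. intros c Hc; apply H2; lra.
      rewrite E2, E1 by lra. pose proof (Hinf xi ltac:(lra)). pose proof (Hinf xi2 ltac:(lra)).
      rewrite HGe in Hb.
      assert ((e - x) * Rinf (CS phi x y) <= (e - x) * phi xi) by (apply Rmult_le_compat_l; lra).
      assert ((y - e) * Rinf (CS phi x y) <= (y - e) * phi xi2) by (apply Rmult_le_compat_l; lra).
      nra.
Qed.
Lemma Rpow_le_neg x y p : 0 < x <= y -> 0 <= p -> Rpower y (- p) <= Rpower x (- p).
Proof.
  intros Hxy Hp. rewrite !Rpower_Ropp. apply Rinv_le_contravar. apply Rpower_pos.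
  apply Rle_Rpower_l; lra.
Qed.

Lemma Rpow_div1 t p : 0 < t -> Rpower t p / t = Rpower t (p - 1).
Proof.
  intros Ht. replace (p - 1) with (p + - (1)) by ring. rewrite Rpower_plus, Rpower_Ropp, Rpower_1 by auto.
  reflexivity.
Qed.

Definition Dq (q : qexp) (th0 th : R) : R :=
  match q with
  | qfin r => Rpower (1 / ((1 - th) * r) + 1 / ((th - th0) * r)) (1 / r)
  | qinf => 1
  end.

Lemma Dq_pos q th0 th : 0 < Dq q th0 th.
Proof. destruct q; simpl. apply Rpower_pos. lra. Qed.

Lemma Nq_explicit q psi th0 th eps A : qexp_ok q -> 0 < th0 < th -> th < 1 -> 0 < eps -> 0 < A ->
  (forall t, 0 < t -> 0 <= psi t) ->
  (forall t, 0 < t -> t <= eps -> psi t <= A * Rpower t (1 - th) * Rpower eps (th0 - 1)) ->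
  (forall t, eps <= t -> psi t <= A * Rpower t (th0 - th)) ->
  Nq q psi <= A * Rpower eps (th0 - th) * Dq q th0 th.
Proof.
  intros Hq Hth Hth1 He HA Hp Hb1 Hb2. destruct q as [r|]; simpl in *.
  - set (I := fun t => rpow (psi t) r / t).
    set (M := Rpower A r). set (be := (1 - th) * r). set (ga := (th - th0) * r).
    set (K1 := M * Rpower eps ((th0 - 1) * r)).
    assert (Hbe : 0 < be) by (unfold be; nra). assert (Hga : 0 < ga) by (unfold ga; nra).
    assert (HM : 0 < M) by apply Rpower_pos. assert (HK1 : 0 < K1) by (unfold K1; pose proof (Rpower_pos eps ((th0-1)*r)); nra).
    assert (HI : forall t, 0 < t -> 0 <= I t).
    { intros t Ht. unfold I. apply Rmult_le_pos. apply rpow_ge0. left; apply Rinv_0_lt_compat; auto. }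
    assert (HI1 : forall t, 0 < t -> t <= eps -> I t <= K1 * Rpower t (be - 1)).
    { intros t Ht Hte. unfold I. rewrite <- Rpow_div1 by auto.
      assert (rpow (psi t) r <= K1 * Rpower t be).
      { pose proof (Rpower_pos t (1 - th)). pose proof (Rpower_pos eps (th0 - 1)).
        apply Rle_trans with (rpow (A * Rpower t (1 - th) * Rpower eps (th0 - 1)) r).
        apply rpow_le. split; auto. lra.
        rewrite rpow_pos by (apply Rmult_lt_0_compat; [apply Rmult_lt_0_compat|]; auto).
        rewrite <- !Rpower_mult_distr by (try apply Rmult_lt_0_compat; auto).
        rewrite !Rpower_mult. unfold K1, M, be. lra. }
      unfold Rdiv. rewrite <- Rmult_assoc. apply Rmult_le_compat_r. left; apply Rinv_0_lt_compat; auto. auto. }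
    assert (HI2 : forall t, eps <= t -> I t <= M * Rpower t (- ga - 1)).
    { intros t Hte. unfold I. rewrite <- Rpow_div1 by lra.
      assert (rpow (psi t) r <= M * Rpower t (- ga)).
      { apply Rle_trans with (rpow (A * Rpower t (th0 - th)) r).
        apply rpow_le. split; auto. apply Hp; lra. lra.
        rewrite rpow_pos by (apply Rmult_lt_0_compat; auto; apply Rpower_pos).
        rewrite <- Rpower_mult_distr by (auto; apply Rpower_pos). rewrite Rpower_mult.
        unfold M, ga. replace ((th0 - th) * r) with (- ((th - th0) * r)) by ring. lra. }
      unfold Rdiv. rewrite <- Rmult_assoc. apply Rmult_le_compat_r. left; apply Rinv_0_lt_compat; lra. auto. }
    set (G1 := fun s => K1 / be * Rpower s be + 0).
    set (G1e := G1 eps).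
    set (G2 := fun s => - (M / ga) * Rpower s (- ga) + (G1e + M / ga * Rpower eps (- ga))).
    set (M' := G1e + M / ga * Rpower eps (- ga)).
    assert (HG1e : 0 <= G1e). { unfold G1e, G1. pose proof (Rpower_pos eps be). pose proof (Rdiv_lt_0_compat _ _ HK1 Hbe). nra. }
    assert (Hcell := cell I G1 (fun s => K1 / be * (be * Rpower s (be - 1))) G2
                      (fun s => - (M / ga) * (- ga * Rpower s (- ga - 1))) eps He HI
                      (fun t Ht => dpow _ _ _ t Ht) (fun t Ht => dpow _ _ _ t Ht)).
    assert (HLS : forall s, lower_sums I s -> s <= M').
    { apply LS_upper with (G := fun t => if Rle_dec t eps then G1 t else G2 t); auto.
      - apply Hcell.
        + unfold G2, G1e. ring.
        + intros t Ht Hte. replace (K1 / be * (be * Rpower t (be - 1))) with (K1 * Rpower t (be - 1)) by (field; lra). auto.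
        + intros t Hte. replace (- (M / ga) * (- ga * Rpower t (- ga - 1))) with (M * Rpower t (- ga - 1)) by (field; lra). auto.
      - intros x y Hx Hxy.
        assert (Gx : 0 <= (if Rle_dec x eps then G1 x else G2 x)).
        { destruct (Rle_dec x eps). unfold G1. pose proof (Rpower_pos x be). pose proof (Rdiv_lt_0_compat _ _ HK1 Hbe). nra.
          unfold G2. pose proof (Rpow_le_neg eps x ga ltac:(lra) ltac:(lra)). pose proof (Rdiv_lt_0_compat _ _ HM Hga). nra. }
        assert (Gy : (if Rle_dec y eps then G1 y else G2 y) <= M').
        { destruct (Rle_dec y eps).
          - assert (G1 y <= G1e). { unfold G1e, G1. pose proof (Rle_Rpower_l y eps be ltac:(lra) ltac:(lra)). pose proof (Rdiv_lt_0_compat _ _ HK1 Hbe). nra. }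
            unfold M'. pose proof (Rpower_pos eps (- ga)). pose proof (Rdiv_lt_0_compat _ _ HM Hga). nra.
          - unfold G2, M'. pose proof (Rpower_pos y (- ga)). pose proof (Rdiv_lt_0_compat _ _ HM Hga). nra. }
        lra. }
    assert (Hbd : bound (lower_sums I)) by (exists M'; auto).
    assert (HS : Rsup (lower_sums I) <= M') by (apply Rsup_le; auto; apply LS_ne).
    assert (HS0 : 0 <= Rsup (lower_sums I)) by (apply Rsup_LS_ge0; auto).
    assert (HM'e : M' = M * Rpower eps (- ga) * (1 / be + 1 / ga)).
    { unfold M', G1e, G1, K1. replace (M * Rpower eps ((th0 - 1) * r) / be * Rpower eps be) with (M / be * (Rpower eps ((th0 - 1) * r) * Rpower eps be)) by (field; lra). rewrite <- Rpower_plus.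
      replace ((th0 - 1) * r + be) with (- ga) by (unfold be, ga; ring). field; lra. }
    assert (HD : 0 < 1 / be + 1 / ga) by (pose proof (Rdiv_lt_0_compat 1 be ltac:(lra) Hbe); pose proof (Rdiv_lt_0_compat 1 ga ltac:(lra) Hga); lra).
    apply Rle_trans with (rpow M' (1 / r)).
    apply rpow_le. lra. apply Rlt_le, Rdiv_lt_0_compat; lra.
    pose proof (Rpower_pos eps (- ga)).
    rewrite rpow_pos by (rewrite HM'e; apply Rmult_lt_0_compat; [apply Rmult_lt_0_compat|]; auto).
    rewrite HM'e. rewrite <- !Rpower_mult_distr by (try apply Rmult_lt_0_compat; auto).
    unfold M. rewrite Rpower_inv' by lra. rewrite Rpower_mult.
    replace (- ga * (1 / r)) with (th0 - th) by (unfold ga; field; lra).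
    unfold be, ga. apply Rle_refl.
  - apply Rsup_le. exists (psi 1); exists 1; split; auto; lra.
    intros y [t [Ht ->]]. rewrite Rmult_1_r.
    destruct (Rle_dec t eps).
    + apply Rle_trans with (1 := Hb1 t Ht r).
      pose proof (Rle_Rpower_l t eps (1 - th) ltac:(lra) ltac:(lra)).
      pose proof (Rpower_pos eps (th0 - 1)).
      rewrite Rmult_assoc. apply Rmult_le_compat_l. lra.
      replace (th0 - th) with ((1 - th) + (th0 - 1)) by ring. rewrite Rpower_plus.
      apply Rmult_le_compat_r; lra.
    + apply Rle_trans with (1 := Hb2 t ltac:(lra)). apply Rmult_le_compat_l. lra.
      replace (th0 - th) with (- (th - th0)) by ring. apply Rpow_le_neg; lra.
Qed.
Lemma theta_ord (n : nat) (theta : nat -> R) : (forall i, (S i < n)%nat -> theta i < theta (S i)) ->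
  forall j, (j < n)%nat -> forall i, (i <= j)%nat -> theta i <= theta j /\ ((i < j)%nat -> theta i < theta j).
Proof.
  intros H. induction j; intros Hj i Hi.
  - assert (i = 0%nat) by lia. subst. split. lra. intros; lia.
  - pose proof (H j Hj). destruct (Nat.eq_dec i (S j)) as [->|Hne]. split. lra. intros; lia.
    destruct (IHj ltac:(lia) i ltac:(lia)) as [A1 A2]. split. lra. intros _. lra.
Qed.

Lemma tK_pos B th t f : 0 < t -> 0 <= tK B th t f.
Proof. intros Ht. unfold tK. apply Rmult_le_pos. left; apply Rpower_pos. apply K_ge0; lra. Qed.

Lemma tK_reg B th f : 0 <= th <= 1 -> forall s t, 0 < s -> s <= t <= 2 * s -> tK B th s f <= 2 * tK B th t f.
Proof.
  intros Hth s t Hs Hst. unfold tK.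
  pose proof (K_mono B s t f ltac:(lra)). pose proof (K_ge0 B s f ltac:(lra)).
  assert (Rpower (2 * s) (- th) <= Rpower t (- th)) by (apply Rpow_le_neg; lra).
  rewrite <- Rpower_mult_distr in H1 by lra.
  assert (/ 2 <= Rpower 2 (- th)).
  { rewrite Rpower_Ropp. apply Rinv_le_contravar. apply Rpower_pos.
    rewrite <- (Rpower_1 2) at 2 by lra. apply Rle_Rpower; lra. }
  pose proof (Rpower_pos s (- th)). pose proof (Rpower_pos t (- th)).
  assert (Rpower s (- th) <= 2 * Rpower t (- th)) by nra.
  nra.
Qed.

Lemma Kf_bound B q th f : qexp_ok q -> 0 < th < 1 -> in_interp B th q f ->
  forall s, 0 < s -> Kfun B s f <= 4 * Rpower s th * interp_norm B th q f.
Proof.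
  intros Hq Hth Hin s Hs. rewrite interp_Nq.
  pose proof (Nq_lower q (fun t => tK B th t f) Hq (in_interp_finq _ _ _ _ Hin) (fun t Ht => tK_pos B th t f Ht)
      (tK_reg B th f ltac:(lra)) s Hs) as H. set (N := Nq q (fun t => tK B th t f)) in *. cbv beta in H. unfold tK in H.
  pose proof (Rpower_pos s th).
  assert (Rpower s th * Rpower s (- th) = 1) by (rewrite <- Rpower_plus; replace (th + - th) with 0 by ring; apply Rpower_O; auto).
  apply Rmult_le_compat_l with (r := Rpower s th) in H; [|lra].
  rewrite <- Rmult_assoc, H1, Rmult_1_l in H. lra.
Qed.
Theorem lemma2p2 (B : banach_couple) (q : qexp) (hq : qexp_ok q)
  (n : nat) (hn : (1 <= n)%nat) (theta : nat -> R)
  (htheta0 : 0 < theta 0%nat)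
  (htheta_incr : forall i, (S i < n)%nat -> theta i < theta (S i))
  (htheta1 : theta (n - 1)%nat < 1)
  (C0 C1 : R) (hC0 : 0 < C0) (hC1 : 0 < C1) :
  exists C : R, 0 < C /\
    forall (eps : R) (l : V B -> R),
      0 < eps ->
      linear_functional B l ->
      (forall f : V B, Rabs (l f) <= C0 * n0 f) ->
      (forall f : V B, X1 f ->
         Rabs (l f) <= C1 * (sum_f_R0 (fun i => Rpower eps (theta i) * interp_norm B (theta i) q f)
                               (n - 1) + eps * n1 f)) ->
      forall f : V B, in_interp B (theta 0%nat) q f ->
        Rabs (l f) <= C * Rpower eps (theta 0%nat) * interp_norm B (theta 0%nat) q f.
Proof.
  set (th0 := theta 0%nat).
  set (Df := fun i => if Nat.eqb i 0 then 3 else 12 * Dq q th0 (theta i)).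
  assert (HDf : forall i, 0 <= Df i).
  { intros i. unfold Df. destruct (Nat.eqb i 0). lra. pose proof (Dq_pos q th0 (theta i)). lra. }
  pose proof (cond_pos_sum Df (n - 1) HDf) as HSD.
  assert (Hord : forall i, (i <= n - 1)%nat -> th0 <= theta i < 1 /\ ((0 < i)%nat -> th0 < theta i)).
  { intros i Hi. destruct (theta_ord n theta htheta_incr (n - 1) ltac:(lia) i Hi) as [A1 _].
    destruct (theta_ord n theta htheta_incr i ltac:(lia) 0%nat ltac:(lia)) as [B1 B2].
    unfold th0. repeat split; try lra. intros; auto. }
  assert (Hth0 : 0 < th0 < 1) by (destruct (Hord 0%nat ltac:(lia)) as [[_ ?] _]; unfold th0 in *; split; lra).
  exists (8 * C0 + C1 * (sum_f_R0 Df (n - 1) + 8)). split. nra.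
  intros eps l Heps [Ladd Lscal] HC0 HC1 f Hf.
  fold th0 in Hf |- *.
  set (N := interp_norm B th0 q f).
  set (E := Rpower eps th0 * N).
  pose proof (Kf_bound B q th0 f hq Hth0 Hf) as Kfb. fold N in Kfb.
  assert (HN0 : 0 <= N). { pose proof (Kfb 1 ltac:(lra)). pose proof (K_ge0 B 1 f ltac:(lra)).
    pose proof (Rpower_pos 1 th0).
    pose proof (Nq_lower q (fun t => tK B th0 t f) hq (in_interp_finq _ _ _ _ Hf) (fun t Ht => tK_pos B th0 t f Ht)
      (tK_reg B th0 f ltac:(lra)) 1 ltac:(lra)). rewrite <- interp_Nq in H2. fold N in H2.
    pose proof (tK_pos B th0 1 f ltac:(lra)). cbv beta in H2. lra. }
  assert (HE : 0 <= E) by (unfold E; pose proof (Rpower_pos eps th0); nra).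
  assert (HCpos : 0 <= (8 * C0 + C1 * (sum_f_R0 Df (n - 1) + 8)) * Rpower eps th0 * N).
  { pose proof (Rpower_pos eps th0). apply Rmult_le_pos; [|lra]. apply Rmult_le_pos; [nra|lra]. }
  set (k := Kfun B eps f).
  assert (Hk0 : 0 <= k) by (apply K_ge0; lra).
  destruct (Req_dec k 0) as [Ek|Ek].
  { pose proof (K_zero B eps f Heps Ek). pose proof (HC0 f). rewrite H in H0. lra. }
  destruct (K_approx B eps f k ltac:(lra) ltac:(lra)) as [g [Hg Hgk]]. fold k in Hgk.
  pose proof (n0_nonneg _ (vadd f (vopp g))) as Hn0. pose proof (n1_nonneg _ g Hg) as Hn1.
  assert (Hkb : k <= 4 * E) by (unfold E; pose proof (Kfb eps Heps); fold k in H; lra).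
  assert (HNp : 0 < N) by (destruct (Req_dec N 0) as [EN|EN]; [unfold E in Hkb; rewrite EN in Hkb; lra | lra]).
  assert (Hn0b : n0 (vadd f (vopp g)) <= 2 * k) by nra.
  assert (Hn1b : eps * n1 g <= 2 * k) by nra.
  assert (Kg1 : forall t, 0 < t -> t <= eps -> Kfun B t g <= t / eps * (2 * k)).
  { intros t Ht Hte. pose proof (K_X1 B t g ltac:(lra) Hg).
    apply Rle_trans with (t * n1 g); auto.
    replace (t / eps * (2 * k)) with (t * ((2 * k) / eps)) by (field; lra).
    apply Rmult_le_compat_l. lra. apply Rmult_le_reg_l with eps. lra. field_simplify; lra. }
  assert (Kg2 : forall t, eps <= t -> Kfun B t g <= Kfun B t f + 2 * k).
  { intros t Hte. pose proof (K_shift B t f g ltac:(lra)). lra. }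
  assert (Kg3 : forall t, 0 < t -> Kfun B t g <= 3 * Kfun B t f).
  { intros t Ht. destruct (Rle_dec t eps).
    - pose proof (K_scale B t eps f ltac:(lra)). fold k in H. pose proof (Kg1 t Ht r).
      assert (t / eps * k <= Kfun B t f).
      { apply Rle_trans with (t / eps * (eps / t * Kfun B t f)).
        apply Rmult_le_compat_l; auto. apply Rlt_le, Rdiv_lt_0_compat; lra.
        right; field; lra. }
      pose proof (K_ge0 B t f ltac:(lra)). lra.
    - pose proof (K_mono B eps t f ltac:(lra)). fold k in H. pose proof (Kg2 t ltac:(lra)). lra. }
  assert (Hterm : forall i, (i <= n - 1)%nat -> Rpower eps (theta i) * interp_norm B (theta i) q g <= Df i * E).
  { intros i Hi. destruct i as [|i].
    - change (theta 0%nat) with th0. unfold Df; simpl. rewrite interp_Nq.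
      assert (Nq q (fun t => tK B th0 t g) <= 3 * N).
      { unfold N. rewrite interp_Nq. apply (Nq_mono q (fun t => tK B th0 t f) (fun t => tK B th0 t g) 3 hq (in_interp_finq _ _ _ _ Hf) ltac:(lra)).
        intros t Ht. split. apply tK_pos; auto. unfold tK. pose proof (Rpower_pos t (- th0)).
        pose proof (Kg3 t Ht). nra. }
      unfold E. pose proof (Rpower_pos eps th0). nra.
    - destruct (Hord (S i) Hi) as [[Hti1 Hti2] Hti3]. specialize (Hti3 ltac:(lia)).
      unfold Df; simpl. set (thi := theta (S i)) in *. rewrite interp_Nq.
      assert (Nq q (fun t => tK B thi t g) <= 12 * N * Rpower eps (th0 - thi) * Dq q th0 thi).
      { apply Nq_explicit; auto; try lra.
        - intros t Ht. apply tK_pos; auto.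
        - intros t Ht Hte. unfold tK. pose proof (Kg1 t Ht Hte). pose proof (Rpower_pos t (- thi)).
          assert (Rpower t (- thi) * Kfun B t g <= Rpower t (- thi) * (t / eps * (2 * k))) by (apply Rmult_le_compat_l; lra).
          assert (Rpower t (- thi) * (t / eps * (2 * k)) <= Rpower t (- thi) * (t / eps * (8 * E))).
          { apply Rmult_le_compat_l. lra. apply Rmult_le_compat_l. apply Rlt_le, Rdiv_lt_0_compat; lra. lra. }
          assert (Rpower t (- thi) * (t / eps * (8 * E)) = 8 * N * Rpower t (1 - thi) * Rpower eps (th0 - 1)).
          { unfold E. rewrite <- (Rpow_div1 eps th0) by lra.
            replace (1 - thi) with (- thi + 1) by ring. rewrite Rpower_plus, Rpower_1 by lra. field. lra. }
          pose proof (Rpower_pos t (1 - thi)). pose proof (Rpower_pos eps (th0 - 1)).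
          assert (0 <= N * Rpower t (1 - thi) * Rpower eps (th0 - 1)) by (apply Rmult_le_pos; [apply Rmult_le_pos|]; lra).
          lra.
        - intros t Hte. unfold tK. pose proof (Kg2 t Hte). pose proof (Kfb t ltac:(lra)).
          pose proof (Rpower_pos t (- thi)).
          assert (Rpower eps th0 <= Rpower t th0) by (apply Rle_Rpower_l; lra).
          assert (Kfun B t g <= 12 * Rpower t th0 * N).
          { unfold E in Hkb. nra. }
          assert (Rpower t (- thi) * Kfun B t g <= Rpower t (- thi) * (12 * Rpower t th0 * N)) by (apply Rmult_le_compat_l; lra).
          replace (12 * N * Rpower t (th0 - thi)) with (Rpower t (- thi) * (12 * Rpower t th0 * N)).
          lra. replace (th0 - thi) with (th0 + - thi) by ring. rewrite Rpower_plus. ring. }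
      assert (Rpower eps thi * Rpower eps (th0 - thi) = Rpower eps th0).
      { rewrite <- Rpower_plus. f_equal. ring. }
      pose proof (Rpower_pos eps thi).
      apply Rle_trans with (Rpower eps thi * (12 * N * Rpower eps (th0 - thi) * Dq q th0 thi)).
      apply Rmult_le_compat_l; lra.
      unfold E. right. replace (Rpower eps thi * (12 * N * Rpower eps (th0 - thi) * Dq q th0 thi))
        with (12 * Dq q th0 thi * (Rpower eps thi * Rpower eps (th0 - thi)) * N) by ring.
      rewrite H0. ring. }
  assert (Hsum : sum_f_R0 (fun i => Rpower eps (theta i) * interp_norm B (theta i) q g) (n - 1) <= sum_f_R0 Df (n - 1) * E).
  { apply Rle_trans with (sum_f_R0 (fun i => Df i * E) (n - 1)).
    apply sum_Rle; auto.
    right. rewrite (Rmult_comm (sum_f_R0 Df (n - 1)) E), <- (sum_scal Df E). apply sum_eq. intros; ring. }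
  pose proof (HC1 g Hg) as Hlg. pose proof (HC0 (vadd f (vopp g))) as Hlfg.
  assert (Hlf : l f = l (vadd f (vopp g)) + l g) by (rewrite <- Ladd; f_equal; apply vdecomp).
  rewrite Hlf.
  apply Rle_trans with (Rabs (l (vadd f (vopp g))) + Rabs (l g)). apply Rabs_triang.
  apply Rle_trans with (C0 * (8 * E) + C1 * (sum_f_R0 Df (n - 1) * E + 8 * E)).
  { apply Rplus_le_compat. apply Rle_trans with (1 := Hlfg). apply Rmult_le_compat_l; lra.
    apply Rle_trans with (1 := Hlg). apply Rmult_le_compat_l. lra. lra. }
  right. unfold E. ring.
Qed.
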